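(* Let $\mathrm{sol}^\star=(x^\star,y^\star,z^\star,\rho^\star,\lambda^\star,\mu^\star,\nu^\star,\eta^\star)$ be any optimizer of problem (P4) below, and assume that $\rho^{(l),\star}_e(t)\ge\epsilon(\beta)$ for all $e\in\mathcal E$, $t\in\mathcal T$, $l\in\mathcal L$. Then $\nu^{(l),\star}_e(t)\rho^{(l),\star}_e(t)\ge0$ for all $e,t,l$.
   Context: Data: integers $n,T,N\ge1$, $\mathcal E=\{1,\dots,n\}$, $\mathcal T=\{0,\dots,T-1\}$, $\mathcal L=\{1,\dots,N\}$, $\mathcal O=\{1,\dots,m\}$; speed-limit values $0<\gamma^{(1)}<\dots<\gamma^{(m)}$; for each $e$: $h_e>0$, $\bar\rho_e>0$, $\bar f_e>0$, $\bar u_e>0$ with $\bar u_e\bar\rho_e>\bar f_e$, $\tau_e=\bar f_e/(\bar u_e\bar\rho_e-\bar f_e)$; constants $\bar\eta>0$, $\epsilon(\beta)>0$; for each sample $l$ given data $\omega^{(l)}(t)\ge0$, initial densities $\rho^{(l)}_e(0)\ge0$, and $\kappa^{(l)}_e(t)=\frac{1-r^{o,(l)}_{e-1}(t)}{1-r^{in,(l)}_e(t)}$ with $r^{o,(l)},r^{in,(l)}\in[0,1)$. Problem (P4): maximize $-\lambda\epsilon(\beta)-\frac1N\sum_{e,t,l}\bar f_e\bar\rho_e\eta^{(l)}_e(t)+\frac1N\sum_{e,t,l}\nu^{(l)}_e(t)\rho^{(l)}_e(t)$ over $x_{e,i}(t),y^{(l)}_{e,i}(t),z^{(l)}_{e,i}(t),\rho^{(l)}_e(t),\lambda,\mu^{(l)}_e(t),\nu^{(l)}_e(t),\eta^{(l)}_e(t)$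 subject to, for all $e,i,t,l$: (speed limits) $x_{e,i}(t)\in\{0,1\}$, $\sum_{i}x_{e,i}(t)=1$, $\gamma^{(1)}\le\sum_i\gamma^{(i)}x_{e,i}(t)\le\gamma^{(m)}$; (linearization) $0\le z^{(l)}_{e,i}(t)\le\bar\eta x_{e,i}(t)$, $\eta^{(l)}_e(t)-\bar\eta(1-x_{e,i}(t))\le z^{(l)}_{e,i}(t)\le\eta^{(l)}_e(t)$, $0\le y^{(l)}_{e,i}(t)\le\bar\rho_ex_{e,i}(t)$, $\rho^{(l)}_e(t)-\bar\rho_e(1-x_{e,i}(t))\le y^{(l)}_{e,i}(t)\le\rho^{(l)}_e(t)$; (sample trajectories) $\rho^{(l)}_1(t+1)=\rho^{(l)}_1(t)+h_1\omega^{(l)}(t)-h_1\sum_i\gamma^{(i)}y^{(l)}_{1,i}(t)$; for $e\ge2$: $\rho^{(l)}_e(t+1)=\rho^{(l)}_e(t)+h_e\kappa^{(l)}_e(t)\sum_i\gamma^{(i)}y^{(l)}_{e-1,i}(t)-h_e\sum_i\gamma^{(i)}y^{(l)}_{e,i}(t)$ and $\kappa^{(l)}_e(t)\sum_i\gamma^{(i)}y^{(l)}_{e-1,i}(t)\le\min\{\bar f_e,\tau_e\bar u_e(\bar\rho_e-\rho^{(l)}_e(t))\}$; $\rho^{(l)}_e(0)$ equal to the given data; (dual constraints) $\sum_i\gamma^{(i)}(\bar\rho_e-\bar f_e/\bar u_e)z^{(l)}_{e,i}(t)-\mu^{(l)}_e(t)+\bar f_e\eta^{(l)}_e(t)\ge0$;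 $\nu^{(l)}_e(t)=\mu^{(l)}_e(t)+\frac1T\sum_i\gamma^{(i)}x_{e,i}(t)$; $\max_{e,t}|\nu^{(l)}_e(t)|\le\lambda$; $0\le\eta^{(l)}_e(t)\le\bar\eta$. *)

(* Defs.v *)
From mathcomp Require Import all_boot all_order all_algebra.
Set Implicit Arguments. Unset Strict Implicit. Unset Printing Implicit Defensive.
Import Order.TTheory GRing.Theory Num.Theory.
Local Open Scope ring_scope.

(* Indices follow the paper: edges e in {1..n}, times t in {0..T-1},
   samples l in {1..N}, speed-limit options i in {1..m}. *)
Record P4data (R : realFieldType) := {
  n : nat; T : nat; N : nat; m : nat;
  gamma : nat -> R;
  h : nat -> R; rhobar : nat -> R; fbar : nat -> R; ubar : nat -> R;
  etabar : R;
  eps : R;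
  omega : nat -> nat -> R;
  rho0 : nat -> nat -> R;
  rout : nat -> nat -> nat -> R;    (* r^{o,(l)}_e(t) : rout l e t *)
  rin : nat -> nat -> nat -> R      (* r^{in,(l)}_e(t) : rin l e t *)
}.

Section P4.
Variable R : realFieldType.
Variable D : P4data R.

Definition tau (e : nat) : R :=
  fbar D e / (ubar D e * rhobar D e - fbar D e).

Definition kappa (l e t : nat) : R :=
  (1 - rout D l e.-1 t) / (1 - rin D l e t).

Definition data_ok : Prop :=
  [/\ (1 <= n D)%N, (1 <= T D)%N, (1 <= N D)%N & (1 <= m D)%N] /\
  (0 < gamma D 1%N /\
   forall i, (1 <= i)%N -> (i < m D)%N -> gamma D i < gamma D i.+1) /\
  (forall e, (1 <= e <= n D)%N ->
     [/\ 0 < h D e, 0 < rhobar D e, 0 < fbar D e, 0 < ubar D e &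
         ubar D e * rhobar D e > fbar D e]) /\
  (0 < etabar D /\ 0 < eps D) /\
  (forall l t, (1 <= l <= N D)%N -> (t < T D)%N ->
     0 <= omega D l t /\
     forall e, (1 <= e <= n D)%N ->
       [/\ 0 <= rout D l e t, rout D l e t < 1,
           0 <= rin D l e t & rin D l e t < 1]) /\
  (forall l e, (1 <= l <= N D)%N -> (1 <= e <= n D)%N -> 0 <= rho0 D l e).

(* Decision variables of (P4). x e i t ; y l e i t ; z l e i t ;
   rho l e t (t in {0..T}) ; lambda ; mu l e t ; nu l e t ; eta l e t. *)
Record P4sol := {
  x : nat -> nat -> nat -> R;
  y : nat -> nat -> nat -> nat -> R;
  z : nat -> nat -> nat -> nat -> R;
  rho : nat -> nat -> nat -> R;
  lam : R;
  mu : nat -> nat -> nat -> R;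
  nu : nat -> nat -> nat -> R;
  eta : nat -> nat -> nat -> R
}.

Definition gsum (f : nat -> R) : R := \sum_(1 <= i < (m D).+1) gamma D i * f i.

Definition feasible (s : P4sol) : Prop :=
  (forall e t, (1 <= e <= n D)%N -> (t < T D)%N ->
     [/\ (forall i, (1 <= i <= m D)%N -> x s e i t = 0 \/ x s e i t = 1),
         \sum_(1 <= i < (m D).+1) x s e i t = 1 &
         gamma D 1%N <= gsum (fun i => x s e i t) <= gamma D (m D)]) /\
  (* linearization *)
  (forall l e i t, (1 <= l <= N D)%N -> (1 <= e <= n D)%N ->
     (1 <= i <= m D)%N -> (t < T D)%N ->
     [/\ 0 <= z s l e i t <= etabar D * x s e i t,
         eta s l e t - etabar D * (1 - x s e i t) <= z s l e i t <= eta s l e t,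
         0 <= y s l e i t <= rhobar D e * x s e i t &
         rho s l e t - rhobar D e * (1 - x s e i t) <= y s l e i t <= rho s l e t]) /\
  (forall l t, (1 <= l <= N D)%N -> (t < T D)%N ->
     rho s l 1%N t.+1 = rho s l 1%N t + h D 1%N * omega D l t
                        - h D 1%N * gsum (fun i => y s l 1%N i t)) /\
  (forall l e t, (1 <= l <= N D)%N -> (2 <= e <= n D)%N -> (t < T D)%N ->
     rho s l e t.+1 = rho s l e t
                      + h D e * kappa l e t * gsum (fun i => y s l e.-1 i t)
                      - h D e * gsum (fun i => y s l e i t)
     /\ kappa l e t * gsum (fun i => y s l e.-1 i t)
          <= Num.min (fbar D e) (tau e * ubar D e * (rhobar D e - rho s l e t))) /\
  (forall l e, (1 <= l <= N D)%N -> (1 <= e <= n D)%N -> rho s l e 0%N = rho0 D l e) /\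
  (forall l e t, (1 <= l <= N D)%N -> (1 <= e <= n D)%N -> (t < T D)%N ->
     [/\ 0 <= gsum (fun i => (rhobar D e - fbar D e / ubar D e) * z s l e i t)
              - mu s l e t + fbar D e * eta s l e t,
         nu s l e t = mu s l e t + (T D)%:R^-1 * gsum (fun i => x s e i t),
         `|nu s l e t| <= lam s &
         0 <= eta s l e t <= etabar D]).

Definition objective (s : P4sol) : R :=
  - lam s * eps D
  - (N D)%:R^-1 * \sum_(1 <= e < (n D).+1) \sum_(0 <= t < T D) \sum_(1 <= l < (N D).+1)
        fbar D e * rhobar D e * eta s l e t
  + (N D)%:R^-1 * \sum_(1 <= e < (n D).+1) \sum_(0 <= t < T D) \sum_(1 <= l < (N D).+1)
        nu s l e t * rho s l e t.

Definition optimizer (s : P4sol) : Prop :=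
  feasible s /\ forall s', feasible s' -> objective s' <= objective s.

End P4.

(* Main.v *)
Require Import Defs.
From mathcomp Require Import all_boot all_order all_algebra.
From mathcomp Require Import ring lra.
Import Order.TTheory GRing.Theory Num.Theory.
Local Open Scope ring_scope.

Lemma sum_single (R : realFieldType) (a b i0 : nat) (F : nat -> R) :
  (a <= i0 < b)%N -> (forall i, i != i0 -> F i = 0) ->
  \sum_(a <= i < b) F i = F i0.
Proof.
move=> /andP[h1 h2] HF.
rewrite (big_cat_nat h1 (ltnW h2)) /= (big_cat_nat (leqnSn i0) h2) /=.
rewrite big_nat1 big1_seq ?add0r; last first.
  move=> i /andP[_]; rewrite mem_index_iota => /andP[_ Hi]; apply: HF.
  by rewrite ltn_eqF.
rewrite big1_seq ?addr0 //.
move=> i /andP[_]; rewrite mem_index_iota => /andP[Hi _]; apply: HF.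
by rewrite gtn_eqF.
Qed.

Theorem proposition1 (R : realFieldType) (D : P4data R) (s : P4sol R) :
  data_ok D ->
  optimizer D s ->
  (forall e t l, (1 <= e <= n D)%N -> (t < T D)%N -> (1 <= l <= N D)%N ->
     eps D <= rho s l e t) ->
  forall e t l, (1 <= e <= n D)%N -> (t < T D)%N -> (1 <= l <= N D)%N ->
     0 <= nu s l e t * rho s l e t.
Proof.
move=> Hok [Hfeas Hopt] Heps e0 t0 l0 He0 Ht0 Hl0.
have [_ [[Hg1 Hginc] [Hedge [[Hetab Hepsp] _]]]] := Hok.
have Hrho : 0 < rho s l0 e0 t0 by apply: lt_le_trans (Heps _ _ _ He0 Ht0 Hl0).
rewrite pmulr_lge0 //.
rewrite leNgt; apply/negP => Hnu.
have gpos : forall i, (1 <= i <= m D)%N -> 0 < gamma D i.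
  elim=> [|i IH]; first by [].
  case: i IH => [|i] IH // /andP[_ Hi].
  have := Hginc i.+1 isT Hi.
  by apply: le_lt_trans; apply/ltW/IH; rewrite /= ltnW.
pose P l e t := [&& l == l0, e == e0 & t == t0].
pose s' := Build_P4sol (x s) (y s) (z s) (rho s) (lam s)
  (fun l e t => if P l e t then mu s l e t - nu s l e t else mu s l e t)
  (fun l e t => if P l e t then 0 else nu s l e t) (eta s).
have Hf' : feasible D s'.
  case: Hfeas => H1 [H2 [H3 [H4 [H5 H6]]]].
  do 5 (split; first by []).
  move=> l e t Hl He Ht; rewrite /s' /=.
  have [A1 A2 A3 A4] := H6 l e t Hl He Ht.
  case: ifP => HP; last by split.
  case/and3P: HP => /eqP El /eqP Ee /eqP Et; subst l e t.
  split => //; last by rewrite normr0 (le_trans _ A3).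
    have [_ _ /andP[Hgx _]] := H1 e0 t0 He0 Ht0.
    have Hc : 0 <= rhobar D e0 - fbar D e0 / ubar D e0.
      have [_ Hrb Hfb Hub Hur] := Hedge e0 He0.
      by rewrite subr_ge0 ler_pdivrMr // mulrC ltW.
    have Hgz : 0 <= gsum D (fun i => (rhobar D e0 - fbar D e0 / ubar D e0) * z s l0 e0 i t0).
      rewrite /gsum big_seq_cond; apply: sumr_ge0 => i /andP[Hi _].
      move: Hi; rewrite mem_index_iota => Hi.
      have [/andP[Hz _] _ _ _] := H2 l0 e0 i t0 Hl0 He0 Hi Ht0.
      by rewrite mulr_ge0 ?(ltW (gpos _ Hi)) // mulr_ge0.
    have [_ _ Hfb _ _] := Hedge e0 He0.
    have [/andP[Het _]] := A4.
    have HT : 0 < (T D)%:R^-1 :> R by rewrite invr_gt0 ltr0n (leq_ltn_trans _ Ht0).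
    have Hgx0 : 0 < gsum D (fun i => x s e0 i t0) by apply: lt_le_trans Hgx.
    rewrite A2.
    have := mulr_gt0 HT Hgx0; have := mulr_ge0 (ltW Hfb) Het. move: Hgz. lra.
  by rewrite A2; ring.
have Hsum : \sum_(1 <= e < (n D).+1) \sum_(0 <= t < T D) \sum_(1 <= l < (N D).+1)
        nu s l e t * rho s l e t -
      \sum_(1 <= e < (n D).+1) \sum_(0 <= t < T D) \sum_(1 <= l < (N D).+1)
        nu s' l e t * rho s' l e t = nu s l0 e0 t0 * rho s l0 e0 t0.
  rewrite -sumrB.
  under eq_bigr => e _ do rewrite -sumrB.
  under eq_bigr => e _ do under eq_bigr => t _ do rewrite -sumrB.
  rewrite (@sum_single _ _ _ e0); last first.
    move=> e Hne; apply: big1 => t _; apply: big1 => l _.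
    by rewrite /s' /= /P (negbTE Hne) /= andbF subrr.
    by rewrite ltnS.
  rewrite (@sum_single _ _ _ t0); last first.
    move=> t Hnt; apply: big1 => l _.
    by rewrite /s' /= /P (negbTE Hnt) /= !andbF subrr.
    by [].
  rewrite (@sum_single _ _ _ l0); last first.
    move=> l Hnl.
    by rewrite /s' /= /P (negbTE Hnl) /= subrr.
    by rewrite ltnS.
  by rewrite /s' /= /P !eqxx /= mul0r subr0.
have HN : 0 < (N D)%:R^-1 :> R.
  by case/andP: Hl0 => Hl1 Hl2; rewrite invr_gt0 ltr0n (leq_trans Hl1 Hl2).
have Hneg : nu s l0 e0 t0 * rho s l0 e0 t0 < 0 by rewrite nmulr_rlt0.
have := Hopt _ Hf'.
rewrite /objective.
set A := \sum_(1 <= e < (n D).+1) \sum_(0 <= t < T D) \sum_(1 <= l < (N D).+1)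
        nu s l e t * rho s l e t.
set B := \sum_(1 <= e < (n D).+1) \sum_(0 <= t < T D) \sum_(1 <= l < (N D).+1)
        nu s' l e t * rho s' l e t.
move: Hsum; rewrite -/A -/B => Hsum.
change (lam s') with (lam s); change (eta s') with (eta s).
have -> : B = A - nu s l0 e0 t0 * rho s l0 e0 t0 by rewrite -Hsum; ring.
rewrite mulrBr.
have Hp : 0 < (N D)%:R^-1 * - (nu s l0 e0 t0 * rho s l0 e0 t0).
  by apply: mulr_gt0 => //; rewrite oppr_gt0.
rewrite mulrN in Hp.
lra.
Qed.
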